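(* Let $M\in\mathbb{R}^{n_1\times n_2}$ have rank $r$ with compact singular value decomposition $M=U\Sigma V^*$, where $U\in\mathbb{R}^{n_1\times r}$, $V\in\mathbb{R}^{n_2\times r}$ have orthonormal columns and $\Sigma$ is diagonal with positive diagonal entries. Let $\Omega\subsetneq[n_1]\times[n_2]$ and $\tau>0$. Assume there is a matrix $Y\in\mathbb{R}^{n_1\times n_2}$ such that (a) $Y=\mathcal{P}_\Omega Y$, (b) $\mathcal{P}_{\mathrm{T}}Y=\frac{1}{\tau}M+UV^*$, (c) $\|\mathcal{P}_{\mathrm{T}^\perp}Y\|\le 1$. Then $M$ is the unique solution of $$\min_{X\in\mathbb{R}^{n_1\times n_2}}\ \|X\|_*+\frac{1}{2\tau}\|X\|_F^2\quad\text{subject to}\quad \mathcal{P}_\Omega X=\mathcal{P}_\Omega M.$$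
   Context: $[n]=\{1,\dots,n\}$. $\mathcal{P}_\Omega$ is the linear map on $\mathbb{R}^{n_1\times n_2}$ keeping the entries indexed by $\Omega$ and setting all others to zero. $\mathrm{T}=\{UX_1^*+X_2V^*: X_1\in\mathbb{R}^{n_2\times r},X_2\in\mathbb{R}^{n_1\times r}\}$, $\mathrm{T}^\perp$ its orthogonal complement with respect to the trace inner product $\langle X,Y\rangle=\mathrm{trace}(X^*Y)$, and $\mathcal{P}_{\mathrm{T}},\mathcal{P}_{\mathrm{T}^\perp}$ the orthogonal projections; explicitly $\mathcal{P}_{\mathrm{T}}Y=UU^*Y+YVV^*-UU^*YVV^*$. $\|\cdot\|$ is the spectral norm, $\|\cdot\|_*$ the nuclear norm (sum of singular values), $\|\cdot\|_F$ the Frobenius norm. *)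

(* Defs.v *)
From HB Require Import structures.
From mathcomp Require Import all_boot all_order all_algebra.
From mathcomp Require Import boolp classical_sets reals.
Set Implicit Arguments. Unset Strict Implicit. Unset Printing Implicit Defensive.
Import Order.TTheory GRing.Theory Num.Theory.
Local Open Scope ring_scope.

Section Defs.
Variable R : realType.

Definition rdiag_mx (m n : nat) (s : 'rV[R]_(minn m n)) : 'M[R]_(m, n) :=
  \matrix_(i < m, j < n)
    \sum_(k < minn m n) (if ((k : nat) == i) && ((k : nat) == j) then s 0 k else 0).

Definition is_svd (m n : nat) (A : 'M[R]_(m, n)) (s : 'rV[R]_(minn m n)) : Prop :=
  exists (P : 'M[R]_m) (Q : 'M[R]_n),
    [/\ P *m P^T = 1%:M, Q *m Q^T = 1%:M,
        (forall k, 0 <= s 0 k) & A = P *m rdiag_mx s *m Q^T].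

(* the vector of singular values (chosen via an SVD; any SVD gives the same
   multiset of singular values) *)
Definition svals (m n : nat) (A : 'M[R]_(m, n)) : 'rV[R]_(minn m n) :=
  xget 0 [set s | is_svd A s].

Definition nuclear_norm (m n : nat) (A : 'M[R]_(m, n)) : R :=
  \sum_(k < minn m n) svals A 0 k.

Definition spectral_norm (m n : nat) (A : 'M[R]_(m, n)) : R :=
  \big[Num.max/0]_(k < minn m n) svals A 0 k.

Definition frob_norm (m n : nat) (A : 'M[R]_(m, n)) : R :=
  Num.sqrt (\sum_(i < m) \sum_(j < n) A i j ^+ 2).

Definition P_Omega (m n : nat) (Om : {set 'I_m * 'I_n}) (X : 'M[R]_(m, n)) : 'M[R]_(m, n) :=
  \matrix_(i < m, j < n) (if (i, j) \in Om then X i j else 0).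

Definition P_T (m n r : nat) (U : 'M[R]_(m, r)) (V : 'M[R]_(n, r)) (Y : 'M[R]_(m, n))
  : 'M[R]_(m, n) :=
  U *m U^T *m Y + Y *m V *m V^T - U *m U^T *m Y *m V *m V^T.

Definition P_Tperp (m n r : nat) (U : 'M[R]_(m, r)) (V : 'M[R]_(n, r)) (Y : 'M[R]_(m, n))
  : 'M[R]_(m, n) := Y - P_T U V Y.

End Defs.

(* Main.v *)
Require Import Defs.
From HB Require Import structures.
From mathcomp Require Import all_boot all_order all_algebra.
From mathcomp Require Import boolp classical_sets reals.
From mathcomp Require Import complex.
From mathcomp Require Import lra ring.
Import Order.TTheory GRing.Theory Num.Theory.
Local Open Scope ring_scope.
Set Implicit Arguments. Unset Strict Implicit. Unset Printing Implicit Defensive.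
Section Eig.
Variable R : realType.

Lemma mx11_tr (M : 'M[R]_1) : M^T = M.
Proof. by apply/matrixP => i j; rewrite !ord1 mxE. Qed.

Definition dot n (u v : 'rV[R]_n) : R := (u *m v^T) 0 0.

Lemma dotE n (u v : 'rV[R]_n) : dot u v = \sum_i u 0 i * v 0 i.
Proof. by rewrite /dot mxE; apply: eq_bigr => i _; rewrite mxE. Qed.

Lemma dot_ge0 n (u : 'rV[R]_n) : 0 <= dot u u.
Proof. by rewrite dotE; apply: sumr_ge0 => i _; rewrite -expr2 sqr_ge0. Qed.

Lemma dot_eq0 n (u : 'rV[R]_n) : dot u u = 0 -> u = 0.
Proof.
rewrite dotE => /eqP; rewrite psumr_eq0; last by move=> i _; rewrite -expr2 sqr_ge0.
move=> /allP H; apply/rowP => i; rewrite mxE.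
by have := H i (mem_index_enum _); rewrite -expr2 sqrf_eq0 => /eqP.
Qed.

Lemma dotC n (u v : 'rV[R]_n) : dot u v = dot v u.
Proof. by rewrite !dotE; apply: eq_bigr => i _; rewrite mulrC. Qed.

Lemma dotDl n (u v w : 'rV[R]_n) : dot (u + v) w = dot u w + dot v w.
Proof. by rewrite /dot mulmxDl mxE. Qed.
Lemma dotZl n c (u w : 'rV[R]_n) : dot (c *: u) w = c * dot u w.
Proof. by rewrite /dot -scalemxAl mxE. Qed.
Lemma dotBl n (u v w : 'rV[R]_n) : dot (u - v) w = dot u w - dot v w.
Proof. by rewrite dotDl -scaleN1r dotZl mulN1r. Qed.
Lemma dotDr n (u v w : 'rV[R]_n) : dot w (u + v) = dot w u + dot w v.
Proof. by rewrite dotC dotDl !(dotC w). Qed.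
Lemma dotBr n (u v w : 'rV[R]_n) : dot w (u - v) = dot w u - dot w v.
Proof. by rewrite dotC dotBl !(dotC w). Qed.
Lemma dotZr n c (u w : 'rV[R]_n) : dot w (c *: u) = c * dot w u.
Proof. by rewrite dotC dotZl !(dotC w). Qed.

Local Open Scope complex_scope.

Lemma Re_sum (I : Type) (r : seq I) (P : pred I) (F : I -> R[i]) :
  complex.Re (\sum_(i <- r | P i) F i) = \sum_(i <- r | P i) complex.Re (F i).
Proof. apply: (big_rec2 (fun a b => complex.Re a = b)) => // i [a b] c _ <-; by case: (F i). Qed.
Lemma Im_sum (I : Type) (r : seq I) (P : pred I) (F : I -> R[i]) :
  complex.Im (\sum_(i <- r | P i) F i) = \sum_(i <- r | P i) complex.Im (F i).
Proof. apply: (big_rec2 (fun a b => complex.Im a = b)) => // i [a b] c _ <-; by case: (F i). Qed.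

Lemma Re_mul (a c : R[i]) : complex.Re (a * c) = complex.Re a * complex.Re c - complex.Im a * complex.Im c.
Proof. by case: a; case: c. Qed.
Lemma Im_mul (a c : R[i]) : complex.Im (a * c) = complex.Re a * complex.Im c + complex.Im a * complex.Re c.
Proof. by case: a; case: c. Qed.

Lemma sym_eigvec n (S : 'M[R]_n.+1) : S^T = S ->
  exists2 v : 'rV[R]_n.+1, v != 0 & exists l, v *m S = l *: v.
Proof.
move=> Ssym.
pose SC := map_mx (fun x : R => x%:C) S.
have [a /eigenvalueP [z zS nz]] := Theorem7' SC isT.
pose x := map_mx (@complex.Re R) z; pose y := map_mx (@complex.Im R) z.
have ex : x *m S = complex.Re a *: x - complex.Im a *: y.
  apply/rowP => j; move/rowP: zS => /(_ j) /(congr1 (@complex.Re R)).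
  rewrite !mxE Re_sum Re_mul => <-; apply: eq_bigr => i _.
  by rewrite !mxE Re_mul /= mulr0 subr0.
have ey : y *m S = complex.Im a *: x + complex.Re a *: y.
  apply/rowP => j; move/rowP: zS => /(_ j) /(congr1 (@complex.Im R)).
  rewrite !mxE Im_sum Im_mul => h; rewrite [RHS]addrC -h; apply: eq_bigr => i _.
  by rewrite !mxE Im_mul /= mulr0 add0r.
have trS : dot (x *m S) y = dot (y *m S) x.
  rewrite /dot; congr (_ 0 0).
  by rewrite -(mx11_tr (x *m S *m y^T)) !trmx_mul trmxK Ssym mulmxA.
rewrite ex ey dotBl dotDl !dotZl (dotC x y) in trS.
have h : complex.Im a * (dot x x + dot y y) = 0 by lra.
have nxy : dot x x + dot y y != 0.
  apply: contra_neq nz => /eqP; rewrite paddr_eq0 ?dot_ge0 // => /andP[/eqP/dot_eq0 x0 /eqP/dot_eq0 y0].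
  apply/rowP => i; move/rowP: x0 => /(_ i); move/rowP: y0 => /(_ i).
  rewrite !mxE; case: (z 0 i) => /= ? ? -> -> //.
have Ia : complex.Im a = 0 by move/eqP: h; rewrite mulf_eq0 (negPf nxy) orbF => /eqP.
rewrite Ia scale0r subr0 in ex; rewrite Ia scale0r add0r in ey.
have [x0|xn0] := eqVneq x 0.
  exists y; last by exists (complex.Re a).
  apply: contra_neq nz => y0; apply/rowP => i; move/rowP: x0 => /(_ i); move/rowP: y0 => /(_ i).
  rewrite !mxE; case: (z 0 i) => /= ? ? -> -> //.
by exists x => //; exists (complex.Re a).
Qed.

End Eig.
Section House.
Variable R : realType.

Lemma mx11_scalar (M : 'M[R]_1) : M = (M 0 0)%:M.
Proof. by apply/matrixP => i j; rewrite !ord1 mxE eqxx mulr1n. Qed.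

Definition refl n (w : 'rV[R]_n) : 'M[R]_n := 1%:M - (2 / dot w w) *: (w^T *m w).

Lemma refl_tr n (w : 'rV[R]_n) : (refl w)^T = refl w.
Proof. by rewrite /refl linearB /= linearZ /= trmx_mul trmxK trmx1. Qed.

Lemma refl_orth n (w : 'rV[R]_n) : refl w *m (refl w)^T = 1%:M.
Proof.
rewrite refl_tr /refl; set d := dot w w; set k := 2 / d.
have ww : w *m w^T = d%:M by rewrite [LHS]mx11_scalar.
have kd : k ^+ 2 * d = 2 * k.
  rewrite /k; have [->|dn0] := eqVneq d 0; first by rewrite invr0 !mulr0.
  by field.
rewrite mulmxBl mul1mx mulmxBr mulmx1 -!scalemxAl -!scalemxAr.
rewrite mulmxA -(mulmxA w^T w w^T) ww mul_mx_scalar -scalemxAl.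
rewrite !scalerA mulrA -expr2 kd.
move: (w^T *m w) => W.
apply/matrixP => i j; rewrite !mxE; ring.
Qed.

Lemma refl_row n (e u : 'rV[R]_n) : dot e e = 1 -> dot u u = 1 ->
  e *m refl (e - u) = u.
Proof.
move=> e1 u1.
have dE : dot (e - u) (e - u) = 2 - 2 * dot e u.
  rewrite dotBl !dotBr e1 u1 (dotC u e); ring.
have ewE : dot e (e - u) = 1 - dot e u by rewrite dotBr e1.
have [w wE] : exists w, w = e - u by eexists.
rewrite -wE in dE ewE *; rewrite /refl.
have ew : e *m w^T = (dot e w)%:M by rewrite [LHS]mx11_scalar.
rewrite mulmxBr mulmx1 -scalemxAr mulmxA ew mul_scalar_mx scalerA.
have [d0|dn0] := eqVneq (dot w w) 0.
  have w0 : w = 0 by apply: dot_eq0.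
  by rewrite d0 invr0 mulr0 mul0r scale0r subr0; apply/eqP; rewrite -subr_eq0 -wE w0.
have -> : 2 / dot w w * dot e w = 1.
  rewrite ewE; move: dn0; rewrite dE => dn0.
  have h : 2 - 2 * dot e u = 2 * (1 - dot e u) by ring.
  rewrite h in dn0 *; field; by move: dn0; rewrite mulf_eq0 negb_or => /andP[].
by rewrite scale1r wE opprB addrC subrK.
Qed.

End House.
Section Triple.
Variable R : realType.

Lemma normalize n (x : 'rV[R]_n) : x != 0 ->
  dot ((Num.sqrt (dot x x))^-1 *: x) ((Num.sqrt (dot x x))^-1 *: x) = 1.
Proof.
move=> nx; rewrite dotZl dotZr mulrA -expr2 exprVn sqr_sqrtr ?dot_ge0 //.
rewrite mulVf //; apply: contra nx => /eqP /dot_eq0 ->; by [].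
Qed.

Definition striple m n (A : 'M[R]_(m, n)) u v (s : R) :=
  [/\ dot u u = 1, dot v v = 1, 0 <= s, u *m A = s *: v & v *m A^T = s *: u].

Lemma trip_eig p q (B : 'M[R]_(p, q)) v l :
  dot v v = 1 -> v *m (B^T *m B) = l *: v -> v *m B^T != 0 ->
  exists u s, striple B u v s.
Proof.
move=> v1 ev nz; set a := v *m B^T.
have al : dot a a = l.
  rewrite /dot /a trmx_mul trmxK mulmxA -(mulmxA v) ev -scalemxAl mxE.
  by rewrite -/(dot v v) v1 mulr1.
set s := Num.sqrt (dot a a).
have s0 : 0 < s by rewrite sqrtr_gt0 lt_def dot_ge0 andbT; apply: contra nz => /eqP /dot_eq0 h; apply/eqP.
exists (s^-1 *: a), s; split.
- exact: normalize.
- exact: v1.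
- exact: ltW.
- rewrite -scalemxAl /a -mulmxA ev scalerA; congr (_ *: _).
  rewrite -al -[dot a a]sqr_sqrtr ?dot_ge0 // -/s expr2 mulrA mulVf ?mul1r //.
  by rewrite gt_eqF.
- by rewrite scalerA mulfV ?gt_eqF // scale1r.
Qed.

Lemma striple_tr m n (A : 'M[R]_(m, n)) u v s : striple A^T v u s -> striple A u v s.
Proof. by case=> h1 h2 h3 h4 h5; split => //; rewrite -(trmxK A). Qed.

Lemma triple m n (A : 'M[R]_(m.+1, n.+1)) : exists u v s, striple A u v s.
Proof.
have [[[u [u1 uA]] [v [v1 vA]]] | H] :=
  pselect ((exists u, dot u u = 1 /\ u *m A = 0) /\ (exists v, dot v v = 1 /\ v *m A^T = 0)).
  by exists u, v, 0; split => //; rewrite scale0r.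
move/not_andP: H => [nU|nV].
  have Ss : (A *m A^T)^T = A *m A^T by rewrite trmx_mul trmxK.
  have [x nx [l xl]] := sym_eigvec Ss.
  set c := (Num.sqrt (dot x x))^-1.
  have [v [s st]] : exists v s, striple A^T v (c *: x) s.
    apply: (trip_eig (l := l)); first exact: normalize.
      by rewrite trmxK -scalemxAl xl scalerA mulrC -scalerA.
    rewrite trmxK; apply/negP => /eqP h; apply: nU; exists (c *: x); split => //.
    exact: normalize.
  by exists (c *: x), v, s; apply: striple_tr.
have Ss : (A^T *m A)^T = A^T *m A by rewrite trmx_mul trmxK.
have [x nx [l xl]] := sym_eigvec Ss.
set c := (Num.sqrt (dot x x))^-1.
have [u [s st]] : exists u s, striple A u (c *: x) s.
  apply: (trip_eig (l := l)); first exact: normalize.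
    by rewrite -scalemxAl xl scalerA mulrC -scalerA.
  apply/negP => /eqP h; apply: nV; exists (c *: x); split => //.
  exact: normalize.
by exists u, (c *: x), s.
Qed.

End Triple.
Section SVD.
Variable R : realType.

Definition orth n (P : 'M[R]_n) := P *m P^T = 1%:M.
Definition gdiag m n (D : 'M[R]_(m, n)) :=
  forall (i : 'I_m) (j : 'I_n), if (i == j :> nat) then 0 <= D i j else D i j == 0.

Lemma orthT n (P : 'M[R]_n) : orth P -> P^T *m P = 1%:M.
Proof. exact: mulmx1C. Qed.

Lemma PPt_dot m n (P : 'M[R]_(m, n)) i j : (P *m P^T) i j = dot (row i P) (row j P).
Proof. by rewrite dotE mxE; apply: eq_bigr => k _; rewrite !mxE. Qed.

Lemma entry_dot m n p q (X : 'M[R]_(m, n)) (A : 'M[R]_(n, p)) (Y : 'M[R]_(q, p)) i j :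
  (X *m A *m Y^T) i j = dot (row i X *m A) (row j Y).
Proof. by rewrite dotE mxE; apply: eq_bigr => k _; rewrite -row_mul !mxE. Qed.

Lemma dot_mul m n (x : 'rV[R]_m) (A : 'M[R]_(m, n)) y : dot (x *m A) y = dot x (y *m A^T).
Proof. by rewrite /dot trmx_mul trmxK mulmxA. Qed.

Lemma orthM n (P Q : 'M[R]_n) : orth P -> orth Q -> orth (P *m Q).
Proof.
by move=> hP hQ; rewrite /orth trmx_mul mulmxA -(mulmxA P) hQ mulmx1.
Qed.

Lemma orthT' n (P : 'M[R]_n) : orth P -> orth P^T.
Proof. by move=> hP; rewrite /orth trmxK; exact: orthT. Qed.

Lemma orth_blk m (P : 'M[R]_m) : orth P -> orth (block_mx (1%:M : 'M_1) 0 0 P).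
Proof.
move=> hP; rewrite /orth tr_block_mx !trmx0 trmx1 mulmx_block.
by rewrite !mulmx0 !mul0mx !mulmx1 !addr0 !add0r hP -scalar_mx_block.
Qed.

Lemma blk3 m n (s : R) (P1 : 'M[R]_m) (D1 : 'M[R]_(m, n)) (Q1 : 'M[R]_n) :
  block_mx (1%:M : 'M_1) 0 0 P1 *m block_mx (s%:M : 'M_1) 0 0 D1 *m
  (block_mx (1%:M : 'M_1) 0 0 Q1)^T = block_mx (s%:M : 'M_1) 0 0 (P1 *m D1 *m Q1^T).
Proof.
rewrite tr_block_mx !trmx0 trmx1 !mulmx_block.
rewrite !mulmx0 !mul0mx !mulmx1 !mul1mx !addr0 !add0r; congr block_mx.
apply/matrixP=> i j; rewrite !mxE big1 // => k _; rewrite mxE mul0r; reflexivity.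
Qed.

Lemma row0_refl n (u : 'rV[R]_n.+1) : dot u u = 1 ->
  row 0 (refl (delta_mx 0 0 - u)) = u.
Proof.
move=> u1; rewrite rowE refl_row //.
by rewrite /dot trmx_delta mul_delta_mx mxE !eqxx.
Qed.

Lemma svd_gen m n (A : 'M[R]_(m, n)) :
  exists P Q D, [/\ orth P, orth Q, gdiag D & A = P *m D *m Q^T].
Proof.
elim: m n A => [|m IH] n A.
  exists 1%:M, 1%:M, 0; split; rewrite /orth ?trmx1 ?mulmx1 //; first by case.
  by rewrite flatmx0 [RHS]flatmx0.
case: n A => [|n] A.
  exists 1%:M, 1%:M, 0; split; rewrite /orth ?trmx1 ?mulmx1 //.
    by move=> i []. 
  by rewrite thinmx0 [RHS]thinmx0.
have [u [v [s [u1 v1 s0 uA vA]]]] := triple A.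
set Pu := refl (delta_mx 0 0 - u); set Qv := refl (delta_mx 0 0 - v).
have oPu : orth Pu := refl_orth _. have oQv : orth Qv := refl_orth _.
have rPu : row 0 Pu = u := row0_refl u1.
have rQv : row 0 Qv = v := row0_refl v1.
pose B : 'M[R]_(1 + m, 1 + n) := Pu *m A *m Qv^T.
have AB : A = Pu^T *m B *m Qv.
  by rewrite /B !mulmxA orthT // mul1mx -mulmxA orthT // mulmx1.
have Bur : ursubmx B = 0.
  apply/matrixP => i j; rewrite mxE [RHS]mxE ord1 /B [usubmx _ _ _]mxE entry_dot.
  have -> : lshift m (0 : 'I_1) = 0 by apply: val_inj.
  rewrite rPu uA dotZl -rQv -PPt_dot oQv mxE /= mulr0n mulr0 //.
have Bdl : dlsubmx B = 0.
  apply/matrixP => i j; rewrite mxE [RHS]mxE ord1 /B [dsubmx _ _ _]mxE entry_dot.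
  have -> : lshift n (0 : 'I_1) = 0 by apply: val_inj.
  rewrite rQv dot_mul vA dotZr -rPu -PPt_dot oPu mxE /= mulr0n mulr0 //.
have Bul : ulsubmx B = s%:M.
  apply/matrixP => i j; rewrite mxE [RHS]mxE !ord1 /B [usubmx _ _ _]mxE entry_dot.
  have -> : lshift n (0 : 'I_1) = 0 by apply: val_inj.
  have -> : lshift m (0 : 'I_1) = 0 by apply: val_inj.
  by rewrite rPu rQv uA dotZl v1 mulr1 eqxx mulr1n.
have [P1 [Q1 [D1 [oP1 oQ1 gD1 AE]]]] := IH _ (drsubmx B).
have BE : B = block_mx s%:M 0 0 (P1 *m D1 *m Q1^T).
  by rewrite -AE -Bur -Bdl -Bul submxK.
exists (Pu^T *m block_mx (1%:M : 'M_1) 0 0 P1), (Qv^T *m block_mx (1%:M : 'M_1) 0 0 Q1),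
  (block_mx (s%:M : 'M_1) 0 0 D1); split.
- by apply: orthM; [apply: orthT' | apply: orth_blk].
- by apply: orthM; [apply: orthT' | apply: orth_blk].
- move=> i j; rewrite -(@splitK 1 m i) -(@splitK 1 n j).
  case: (@split 1 m i) => i'; case: (@split 1 n j) => j' /=.
  + by rewrite (block_mxEul (s%:M : 'M[R]_1)) !ord1 /= mxE eqxx mulr1n.
  + by rewrite (block_mxEur (s%:M : 'M[R]_1)) mxE eqxx lexx; case: ifP.
  + by rewrite (block_mxEdl (s%:M : 'M[R]_1)) mxE eqxx lexx; case: ifP.
  + rewrite (block_mxEdr (s%:M : 'M[R]_1)) /= eqSS; exact: gD1.
- rewrite {1}AB BE trmx_mul trmxK !mulmxA -blk3.
  by rewrite !mulmxA.
Qed.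

End SVD.
Section Conv.
Variable R : realType.

Lemma svd_exists m n (A : 'M[R]_(m, n)) : exists s, is_svd A s.
Proof.
have [P [Q [D [oP oQ gD AE]]]] := svd_gen A.
pose wm (k : 'I_(minn m n)) : 'I_m := widen_ord (geq_minl m n) k.
pose wn (k : 'I_(minn m n)) : 'I_n := widen_ord (geq_minr m n) k.
exists (\row_k D (wm k) (wn k)); exists P, Q; split => //.
  by move=> k; rewrite mxE; have := gD (wm k) (wn k); rewrite /= eqxx.
rewrite AE; congr (_ *m _ *m _); apply/matrixP => i j; rewrite mxE.
have := gD i j; case: eqP => [ij _|nij /eqP ->].
  have ilt : (i < minn m n)%N by rewrite leq_min ltn_ord ij ltn_ord.
  rewrite (bigD1 (Ordinal ilt)) /= ?eqxx ?ij //= big1 ?addr0.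
    rewrite mxE (_ : (i == j :> nat) = true); last exact/eqP.
    have -> : wm (Ordinal ilt) = i by apply: val_inj.
    by have -> : wn (Ordinal ilt) = j by apply: val_inj.
  move=> k /negbTE kn; case: ifP => // /andP [/eqP ki _].
  have kk : k = Ordinal ilt by apply: val_inj.
  by move: kn; rewrite kk eqxx.
rewrite big1 // => k _; case: ifP => // /andP [/eqP ki /eqP kj]; case: nij.
by rewrite -ki -kj.
Qed.

Lemma svals_svd m n (A : 'M[R]_(m, n)) : is_svd A (svals A).
Proof. by apply: xgetPex; have [s h] := svd_exists A; exists s. Qed.

End Conv.
Section Thin.
Variable R : realType.

Definition Em m p : 'M[R]_(m, p) := \matrix_(i, k) ((i : nat) == k)%:R.

Lemma EmTEm m p : (p <= m)%N -> (Em m p)^T *m Em m p = 1%:M.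
Proof.
move=> pm; apply/matrixP => k k'; rewrite !mxE.
have klt : (k < m)%N by apply: leq_trans (ltn_ord k) pm.
rewrite (bigD1 (Ordinal klt)) //= big1 ?addr0.
  by rewrite !mxE /= eqxx mul1r.
move=> i /negbTE ni; rewrite !mxE.
case: (i == k :> nat) / eqP => [ik|]; last by rewrite mul0r.
have kk : i = Ordinal klt by apply: val_inj.
by rewrite kk eqxx in ni.
Qed.

Lemma svd_thin m n (X : 'M[R]_(m, n)) s : is_svd X s ->
  exists (Pw : 'M[R]_(m, minn m n)) (Qw : 'M[R]_(n, minn m n)),
  [/\ Pw^T *m Pw = 1%:M, Qw^T *m Qw = 1%:M & X = Pw *m diag_mx s *m Qw^T].
Proof.
case=> P [Q [oP oQ s0 XE]].
exists (P *m Em m (minn m n)), (Q *m Em n (minn m n)); split.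
- by rewrite trmx_mul mulmxA -(mulmxA _ P^T) (mulmx1C oP) mulmx1 EmTEm // geq_minl.
- by rewrite trmx_mul mulmxA -(mulmxA _ Q^T) (mulmx1C oQ) mulmx1 EmTEm // geq_minr.
suff E : @rdiag_mx R m n s = Em m (minn m n) *m diag_mx s *m (Em n (minn m n))^T.
  by rewrite XE E trmx_mul !mulmxA.
apply/matrixP => i j; rewrite mul_mx_diag !mxE; apply: eq_bigr => k _.
rewrite !mxE (eq_sym (i : nat)) (eq_sym (j : nat)).
by case: (k == i :> nat); case: (k == j :> nat); rewrite /= ?mul1r ?mulr1 ?mul0r ?mulr0.
Qed.


End Thin.
Section Contr.
Variable R : realType.

Definition contr m n (Z : 'M[R]_(m, n)) :=
  forall a b, 2 * dot (a *m Z) b <= dot a a + dot b b.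

Definition ip m n (A B : 'M[R]_(m, n)) : R := \tr (A^T *m B).

Lemma bessel_eq p q (U : 'M[R]_(p, q)) a : U^T *m U = 1%:M ->
  dot (a - a *m U *m U^T) (a - a *m U *m U^T) = dot a a - dot (a *m U) (a *m U).
Proof.
move=> hU.
have e1 : dot a (a *m U *m U^T) = dot (a *m U) (a *m U) by rewrite dot_mul.
have e2 : dot (a *m U *m U^T) (a *m U *m U^T) = dot (a *m U) (a *m U).
  by rewrite dot_mul trmxK -mulmxA hU mulmx1.
rewrite dotBl !dotBr e1 e2 (dotC (a *m U *m U^T)) e1; ring.
Qed.

Lemma bessel p q (U : 'M[R]_(p, q)) a : U^T *m U = 1%:M ->
  dot (a *m U) (a *m U) <= dot a a.
Proof.
move=> hU; have := dot_ge0 (a - a *m U *m U^T); rewrite bessel_eq //.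
by rewrite subr_ge0.
Qed.

Lemma dot_diag r (x y sg : 'rV[R]_r) :
  dot (x *m diag_mx sg) y = \sum_k x 0 k * sg 0 k * y 0 k.
Proof. by rewrite dotE; apply: eq_bigr => k _; rewrite mul_mx_diag mxE. Qed.

Lemma thin_contr m n r (U : 'M[R]_(m, r)) (V : 'M[R]_(n, r)) (sg : 'rV[R]_r) :
  U^T *m U = 1%:M -> V^T *m V = 1%:M -> (forall k, 0 <= sg 0 k <= 1) ->
  contr (U *m diag_mx sg *m V^T).
Proof.
move=> hU hV hs a b.
rewrite !mulmxA dot_mul trmxK dot_diag.
apply: (@le_trans _ _ (dot (a *m U) (a *m U) + dot (b *m V) (b *m V))); last first.
  by apply: lerD; apply: bessel.
rewrite !dotE mulr_sumr -big_split /=; apply: ler_sum => k _.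
have /andP[h0 h1] := hs k.
move: (a *m U) (b *m V) => x y; set X := x 0 k; set Y := y 0 k; set s := sg 0 k in h0 h1 *.
have e1 : 0 <= (X - s * Y) ^+ 2 by apply: sqr_ge0.
have e2 : 0 <= (1 - s * s) * (Y * Y).
  apply: mulr_ge0; last by rewrite -expr2 sqr_ge0.
  rewrite subr_ge0; nra.
nra.
Qed.

Lemma ip_thin_le m n r (Z : 'M[R]_(m, n)) (U : 'M[R]_(m, r)) (V : 'M[R]_(n, r)) (sg : 'rV[R]_r) :
  U^T *m U = 1%:M -> V^T *m V = 1%:M -> (forall k, 0 <= sg 0 k) -> contr Z ->
  ip Z (U *m diag_mx sg *m V^T) <= \sum_k sg 0 k.
Proof.
move=> hU hV hs hZ.
rewrite /ip !mulmxA mxtrace_mulC !mulmxA /mxtrace; apply: ler_sum => k _.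
rewrite mul_mx_diag mxE.
rewrite -[U in V^T *m Z^T *m U](trmxK U) entry_dot dot_mul trmxK dotC.
set u := row k U^T; set v := row k V^T.
have := hZ u v.
have -> : dot u u = 1 by rewrite /u -PPt_dot trmxK hU mxE eqxx.
have -> : dot v v = 1 by rewrite /v -PPt_dot trmxK hV mxE eqxx.
have := hs k; set t := dot (u *m Z) v; set g := sg 0 k; nra.
Qed.

Lemma ip_sum m n (A B : 'M[R]_(m, n)) : ip A B = \sum_i \sum_j A i j * B i j.
Proof.
rewrite /ip /mxtrace exchange_big; apply: eq_bigr => j _; rewrite mxE.
by apply: eq_bigr => i _; rewrite mxE.
Qed.

Lemma ipC m n (A B : 'M[R]_(m, n)) : ip A B = ip B A.
Proof. by rewrite /ip -mxtrace_tr trmx_mul trmxK. Qed.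

Lemma ipDl m n (A B C : 'M[R]_(m, n)) : ip (A + B) C = ip A C + ip B C.
Proof. by rewrite /ip linearD /= mulmxDl mxtraceD. Qed.

Lemma ipZl m n c (A C : 'M[R]_(m, n)) : ip (c *: A) C = c * ip A C.
Proof. by rewrite /ip linearZ /= -scalemxAl mxtraceZ. Qed.

Lemma ipBl m n (A B C : 'M[R]_(m, n)) : ip (A - B) C = ip A C - ip B C.
Proof. by rewrite ipDl -scaleN1r ipZl mulN1r. Qed.

Lemma ipDr m n (A B C : 'M[R]_(m, n)) : ip C (A + B) = ip C A + ip C B.
Proof. by rewrite ipC ipDl !(ipC C). Qed.

Lemma ipBr m n (A B C : 'M[R]_(m, n)) : ip C (A - B) = ip C A - ip C B.
Proof. by rewrite ipC ipBl !(ipC C). Qed.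

Lemma ipZr m n c (A C : 'M[R]_(m, n)) : ip C (c *: A) = c * ip C A.
Proof. by rewrite ipC ipZl ipC. Qed.

Lemma ip_ge0 m n (A : 'M[R]_(m, n)) : 0 <= ip A A.
Proof. by rewrite ip_sum; apply: sumr_ge0 => i _; apply: sumr_ge0 => j _; rewrite -expr2 sqr_ge0. Qed.

Lemma ip_eq0 m n (A : 'M[R]_(m, n)) : ip A A = 0 -> A = 0.
Proof.
rewrite ip_sum => /eqP; rewrite psumr_eq0; last first.
  by move=> i _; apply: sumr_ge0 => j _; rewrite -expr2 sqr_ge0.
move=> /allP H; apply/matrixP => i j; rewrite mxE.
have := H i (mem_index_enum _); rewrite psumr_eq0; last by move=> *; rewrite -expr2 sqr_ge0.
by move=> /allP /(_ j (mem_index_enum _)); rewrite -expr2 sqrf_eq0 => /eqP.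
Qed.

End Contr.
Section Main.
Variable R : realType.

Lemma UVW_contr m n r (U : 'M[R]_(m, r)) (V : 'M[R]_(n, r)) (W : 'M[R]_(m, n)) :
  U^T *m U = 1%:M -> V^T *m V = 1%:M -> U^T *m W = 0 -> W *m V = 0 -> contr W ->
  contr (U *m V^T + W).
Proof.
move=> hU hV hUW hWV hW a b.
set a2 := a - a *m U *m U^T; set b2 := b - b *m V *m V^T.
have e1 : dot (a *m (U *m V^T + W)) b = dot (a *m U) (b *m V) + dot (a *m W) b.
  by rewrite mulmxDr dotDl mulmxA dot_mul trmxK.
have e2 : a *m W = a2 *m W by rewrite /a2 mulmxBl -!mulmxA hUW !mulmx0 subr0.
have e3 : dot (a2 *m W) b = dot (a2 *m W) b2.
  rewrite /b2 dotBr -[X in _ = _ - X]dot_mul -mulmxA hWV mulmx0.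
  by rewrite [X in _ = _ - X]dotE big1 ?subr0 // => k _; rewrite mxE mul0r.
have e4 := hW a2 b2.
have e5 := dot_ge0 (a *m U - b *m V).
rewrite dotBl !dotBr (dotC (b *m V)) in e5.
have e6 : dot a2 a2 = dot a a - dot (a *m U) (a *m U) by apply: bessel_eq.
have e7 : dot b2 b2 = dot b b - dot (b *m V) (b *m V) by apply: bessel_eq.
rewrite e1 e2 e3; lra.
Qed.

Lemma ip_Omega m n (Om : {set 'I_m * 'I_n}) (Y X : 'M[R]_(m, n)) :
  Y = P_Omega Om Y -> ip Y X = ip Y (P_Omega Om X).
Proof.
move=> YO; rewrite !ip_sum; apply: eq_bigr => i _; apply: eq_bigr => j _.
rewrite mxE; case: ifP => // hij.
by move/matrixP: YO => /(_ i j); rewrite mxE hij => ->; rewrite !mul0r.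
Qed.

Lemma frobE m n (X : 'M[R]_(m, n)) : frob_norm X ^+ 2 = ip X X.
Proof.
rewrite /frob_norm sqr_sqrtr ?ip_sum //.
by apply: sumr_ge0 => i _; apply: sumr_ge0 => j _; rewrite sqr_ge0.
Qed.

Lemma nuc_ge m n (Z X : 'M[R]_(m, n)) : contr Z -> ip Z X <= nuclear_norm X.
Proof.
move=> cZ; have hs := svals_svd X.
have [Pw [Qw [hP hQ XE]]] := svd_thin hs.
case: hs => P [Q [_ _ s0 _]].
by rewrite {1}XE /nuclear_norm; apply: ip_thin_le.
Qed.

End Main.
Unset Implicit Arguments.
Theorem theorem3 (R : realType) (n1 n2 r : nat)
  (M : 'M[R]_(n1, n2)) (U : 'M[R]_(n1, r)) (V : 'M[R]_(n2, r)) (sig : 'rV[R]_r)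
  (Om : {set 'I_n1 * 'I_n2}) (tau : R) :
  \rank M = r ->
  U^T *m U = 1%:M ->
  V^T *m V = 1%:M ->
  (forall k, 0 < sig 0 k) ->
  M = U *m diag_mx sig *m V^T ->
  Om \proper [set: 'I_n1 * 'I_n2]%SET ->
  0 < tau ->
  (exists Y : 'M[R]_(n1, n2),
      [/\ Y = P_Omega Om Y,
          P_T U V Y = tau^-1 *: M + U *m V^T
        & spectral_norm (P_Tperp U V Y) <= 1]) ->
  let obj := fun X : 'M[R]_(n1, n2) =>
    nuclear_norm X + (2 * tau)^-1 * frob_norm X ^+ 2 in
  (forall X : 'M[R]_(n1, n2), P_Omega Om X = P_Omega Om M -> obj M <= obj X) /\
  (forall X : 'M[R]_(n1, n2), P_Omega Om X = P_Omega Om M -> obj X <= obj M -> X = M).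
Proof.
move=> _ hU hV hsig ME _ tau0 [Y [YO PTY nW]] obj.
set W := P_Tperp U V Y.
have hUW : U^T *m W = 0.
  rewrite /W /P_Tperp /P_T !mulmxBr !mulmxDr !mulmxA hU !mul1mx.
  by rewrite addrK subrr.
have hWV : W *m V = 0.
  rewrite /W /P_Tperp /P_T !mulmxBl !mulmxDl -!mulmxA hV !mulmx1.
  by rewrite [X in _ - X]addrC addKr subrr.
have cW : contr W.
  have hs := svals_svd W.
  have [Pw [Qw [hP hQ WE]]] := svd_thin hs.
  case: hs => P [Q [_ _ s0 _]].
  rewrite WE; apply: thin_contr => // k; rewrite s0 /=.
  apply: le_trans nW; exact: le_bigmax.
have cZ : contr (U *m V^T + W) by apply: UVW_contr.
have YE : Y = tau^-1 *: M + (U *m V^T + W).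
  by rewrite /W /P_Tperp PTY addrA addrC subrK.
have sig0 : forall k, 0 <= sig 0 k by move=> k; apply: ltW.
have trM : ip (U *m V^T + W) M = \sum_k sig 0 k.
  rewrite ipDl.
  have -> : ip W M = 0.
    rewrite /ip ME !mulmxA -(trmxK U) -trmx_mul hUW trmx0 !mul0mx.
    by rewrite /mxtrace big1 // => i _; rewrite mxE.
  rewrite addr0 /ip ME trmx_mul trmxK !mulmxA -(mulmxA V) hU mulmx1.
  by rewrite mxtrace_mulC mulmxA hV mul1mx mxtrace_diag.
have nucM : nuclear_norm M <= \sum_k sig 0 k.
  have hs := svals_svd M.
  have [Pw [Qw [hP hQ XE]]] := svd_thin hs.
  case: hs => P [Q [_ _ s0 _]].
  have cZ' : contr (Pw *m Qw^T).
    have -> : Pw *m Qw^T = Pw *m diag_mx (const_mx 1) *m Qw^T.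
      by rewrite diag_const_mx mulmx1.
    by apply: thin_contr => // k; rewrite mxE ler01 lexx.
  have -> : nuclear_norm M = ip (Pw *m Qw^T) M.
    rewrite {2}XE /ip trmx_mul trmxK !mulmxA -(mulmxA Qw) hP mulmx1.
    by rewrite mxtrace_mulC mulmxA hQ mul1mx mxtrace_diag.
  by rewrite ME; apply: ip_thin_le.
have main : forall X, P_Omega Om X = P_Omega Om M ->
    obj X - obj M >= (2 * tau)^-1 * ip (X - M) (X - M).
  move=> X hX.
  have h1 : ip Y X = ip Y M by rewrite (ip_Omega X YO) hX -(ip_Omega M YO).
  have {}h1 : tau^-1 * ip M X + ip (U *m V^T + W) X = tau^-1 * ip M M + \sum_k sig 0 k.
    by rewrite -trM -!ipZl -!ipDl -YE.
  have h2 := nuc_ge X cZ.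
  have h3 : ip (X - M) (X - M) = ip X X - 2 * ip M X + ip M M.
    rewrite ipBl !ipBr (ipC X M); ring.
  rewrite /obj !frobE h3 invfM.
  set t := tau^-1 in h1 *.
  set a := ip X X in h3 *; set b := ip M X in h1 h3 *; set c := ip M M in h1 h3 *.
  set z := ip _ X in h1 h2.
  set s := \sum_k sig 0 k in trM h1 nucM.
  clearbody t a b c z s.
  have -> : 2^-1 * t * (a - 2 * b + c) = 2^-1 * t * a - t * b + 2^-1 * t * c.
    by rewrite !mulrDr mulrN !mulrA (mulrC _ 2) mulrA mulfV ?mul1r // pnatr_eq0.
  lra.
have t0 : 0 < (2 * tau)^-1 by rewrite invr_gt0 mulr_gt0.
split.
  move=> X hX; have := main X hX.
  have := ip_ge0 (X - M); set D := ip _ _ => hD h.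
  have : 0 <= (2 * tau)^-1 * D by apply: mulr_ge0 => //; exact: ltW.
  lra.
move=> X hX hle; have := main X hX.
have := ip_ge0 (X - M); set D := ip _ _ => hD h.
have : (2 * tau)^-1 * D <= 0 by lra.
rewrite pmulr_rle0 // => hD'.
have : D = 0 by apply/eqP; rewrite eq_le hD' hD.
by move/ip_eq0/eqP; rewrite subr_eq0 => /eqP.
Qed.
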